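(* Let $m>n>0$ be relatively prime integers and $(r,s)\in\mathbb{Z}^2$. Then $(r,s)=\beta(m,n)$ if and only if $(s,\,r-2s)=\beta(2m+n,\,m)$.
   Context: For relatively prime integers $a>b>0$, $\beta(a,b)$ denotes the Bézout coefficients given by the Euclidean algorithm: with $a=q_1b+r_1$, $b=q_2r_1+r_2$, $\dots$, $r_{k-2}=q_kr_{k-1}+r_k$, $r_{k-1}=1$, $r_k=0$ ($r_{-1}=a$, $r_0=b$), write $\begin{pmatrix}a\\ b\end{pmatrix}=M\begin{pmatrix}1\\0\end{pmatrix}$ with $M=\prod_{i=1}^k\begin{pmatrix}q_i&1\\1&0\end{pmatrix}$; then $\beta(a,b)$ is the first row of $M^{-1}$, and $\beta(a,b)=(r,s)$ satisfies $ra+sb=1$. *)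

(* Defs.v *)
From HB Require Import structures.
From mathcomp Require Import all_boot all_order all_algebra.
Set Implicit Arguments. Unset Strict Implicit. Unset Printing Implicit Defensive.
Import Order.TTheory GRing.Theory Num.Theory.
Local Open Scope ring_scope.

(* Quotients q_1, ..., q_k of the Euclidean algorithm on (a, b):
   a = q_1 b + r_1, b = q_2 r_1 + r_2, ..., stopping when the remainder is 0.
   [fuel] bounds the number of steps; b.+1 steps always suffice since the
   second argument strictly decreases. *)
Fixpoint euclid_quots (fuel a b : nat) : seq nat :=
  match fuel with
  | 0 => [::]
  | fuel'.+1 => if b == 0%N then [::] else (a %/ b)%N :: euclid_quots fuel' b (a %% b)
  end.

Definition quotients (a b : nat) : seq nat := euclid_quots b.+1 a b.

Definition qmat (q : nat) : 'M[int]_2 :=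
  \matrix_(i < 2, j < 2)
    (if i == 0 :> nat then (if j == 0 :> nat then q%:Z else 1)
     else (if j == 0 :> nat then 1 else 0)).

Definition euclidM (a b : nat) : 'M[int]_2 := \prod_(q <- quotients a b) qmat q.

Definition beta (a b : nat) : int * int :=
  let Mi := invmx (euclidM a b) in (Mi 0 0, Mi 0 1).

(* Main.v *)
Require Import Defs.
From HB Require Import structures.
From mathcomp Require Import all_boot all_order all_algebra.
From mathcomp Require Import ring.
Import Order.TTheory GRing.Theory Num.Theory.
Local Open Scope ring_scope.

Lemma euclid_fuel f g a b : (b < f)%N -> (b < g)%N ->
  euclid_quots f a b = euclid_quots g a b.
Proof.
elim: f g a b => [|f IH] [|g] a b //= hf hg.
case: eqP => // /eqP b0; congr (_ :: _); apply: IH.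
  by apply: leq_trans (ltn_pmod _ _) _; rewrite ?lt0n.
by apply: leq_trans (ltn_pmod _ _) _; rewrite ?lt0n.
Qed.

Lemma quots2 m n : (0 < n)%N -> (n < m)%N ->
  quotients (2 * m + n) m = 2%N :: quotients m n.
Proof.
move=> n0 nm; rewrite /quotients /=.
have m0 : (m != 0)%N by rewrite -lt0n (leq_trans n0 (ltnW nm)).
rewrite (negPf m0).
have -> : ((2 * m + n) %/ m = 2)%N by rewrite divnMDl ?lt0n // divn_small.
have -> : ((2 * m + n) %% m = n)%N by rewrite modnMDl modn_small.
congr (_ :: _).
rewrite -[RHS]/(euclid_quots n.+1 m n); apply: euclid_fuel => //.
Qed.

Definition qinv (q : nat) : 'M[int]_2 :=
  \matrix_(i < 2, j < 2)
    (if i == 0 :> nat then (if j == 0 :> nat then 0 else 1)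
     else (if j == 0 :> nat then 1 else - q%:Z)).

Lemma qmat_inv q : qmat q *m qinv q = 1%:M.
Proof.
apply/matrixP => i j; rewrite !mxE !big_ord_recr big_ord0 /= !mxE.
case: i => [[|[|//]] ?]; case: j => [[|[|//]] ?] /=; ring.
Qed.

Lemma qmat_unit q : qmat q \in unitmx.
Proof. by have [] := mulmx1_unit (qmat_inv q). Qed.

Lemma euclidM_unit a b : euclidM a b \in unitmx.
Proof.
rewrite /euclidM; apply: (big_ind (fun A : 'M[int]_2 => A \in unitmx)).
- exact: unitmx1.
- by move=> x y hx hy; rewrite unitmx_mul hx hy.
- by move=> q _; exact: qmat_unit.
Qed.

Lemma invM2 m n : (0 < n)%N -> (n < m)%N ->
  invmx (euclidM (2 * m + n) m) = invmx (euclidM m n) *m qinv 2.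
Proof.
move=> n0 nm.
have E : euclidM (2 * m + n) m = qmat 2 *m euclidM m n.
  by rewrite /euclidM quots2 // big_cons.
have U := euclidM_unit (2 * m + n) m.
set X := invmx (euclidM m n) *m qinv 2.
have H : X *m euclidM (2 * m + n) m = 1%:M.
  rewrite E /X -mulmxA (mulmxA (qinv 2)).
  have -> : qinv 2 *m qmat 2 = 1%:M by apply: mulmx1C; exact: qmat_inv.
  by rewrite mul1mx mulVmx // euclidM_unit.
by rewrite -[X]mulmx1 -(mulmxV U) mulmxA H mul1mx.
Qed.

Lemma sum2 (F : 'I_2 -> int) : \sum_i F i = F 0 + F 1.
Proof. by rewrite big_ord_recl big_ord1; congr (_ + F _); apply: val_inj. Qed.

Theorem lemma2p2 (m n : nat) (r s : int) :
  (0 < n)%N -> (n < m)%N -> coprime m n ->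
  ((r, s) = beta m n <-> (s, r - 2 * s) = beta (2 * m + n)%N m).
Proof.
move=> n0 nm _; rewrite /beta invM2 //.
set Mi := invmx (euclidM m n).
rewrite !mxE !sum2 !mxE /=.
have -> : Mi 0 0 * 0 + Mi 0 1 * 1 = Mi 0 1 by ring.
have -> : Mi 0 0 * 1 + Mi 0 1 * - (2%:Z) = Mi 0 0 - 2 * Mi 0 1 by ring.
split; first by case=> -> ->.
case=> hs hr; rewrite hs; congr (_, _).
by move: hr; rewrite hs => /addIr.
Qed.
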